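(* Let $N\ge4$, $n=N-1$, $\epsilon>0$, let $\pi=(\pi_{ij})$ be a trace-free symmetric real $n\times n$ matrix, and let $a_1,a_2\in\mathbb{R}$. Define on $\mathbb{R}^N_+$ \[\Phi(x)=\frac{\epsilon\,\pi_{ij}x_ix_j}{(|\bar x|^2+(x_N+1)^2)^{\frac N2}}\Big[\Big(\frac{N-2}{2}\Big)(x_N-1)+\frac{a_1(x_N+1)}{(|\bar x|^2+(x_N+1)^2)^2}+\frac{a_2}{|\bar x|^2+(x_N+1)^2}\Big].\] Then $-\Delta\Phi=2\epsilon\,\pi_{ij}\,x_N\,\partial_{ij}W_{1,0}$ in $\mathbb{R}^N_+$.
   Context: $\mathbb{R}^N_+=\{x=(\bar x,x_N):\bar x\in\mathbb{R}^n,\ x_N>0\}$. $W_{1,0}(x)=(|\bar x|^2+(x_N+1)^2)^{-\frac{N-2}{2}}$. Repeated indices $i,j$ are summed from $1$ to $n$. *)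

(* Defs.v *)
From HB Require Import structures.
From mathcomp Require Import all_boot all_order all_algebra.
From mathcomp Require Import all_classical all_reals all_analysis.
Set Implicit Arguments. Unset Strict Implicit. Unset Printing Implicit Defensive.
Import Order.TTheory GRing.Theory Num.Theory.
Import numFieldNormedType.Exports.
Local Open Scope ring_scope.

(* Points of R^N with N = n.+1 are row vectors 'rV[R]_(n.+1);
   the last coordinate (index ord_max, value n) is x_N,
   the first n coordinates form \bar x. *)

Definition xN {R : realType} {n : nat} (x : 'rV[R]_n.+1) : R := x ord0 ord_max.
Definition xb {R : realType} {n : nat} (x : 'rV[R]_n.+1) (i : 'I_n) : R :=
  x ord0 (widen_ord (leqnSn n) i).

Definition rho {R : realType} {n : nat} (x : 'rV[R]_n.+1) : R :=
  \sum_(i < n) xb x i ^+ 2 + (xN x + 1) ^+ 2.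

Definition ecoord {R : realType} {n : nat} (k : 'I_n.+1) : 'rV[R]_n.+1 :=
  delta_mx ord0 k.

Definition partial {R : realType} {n : nat} (k : 'I_n.+1)
  (f : 'rV[R]_n.+1 -> R) : 'rV[R]_n.+1 -> R :=
  fun x => 'D_(ecoord k) f x.

Definition laplacian {R : realType} {n : nat} (f : 'rV[R]_n.+1 -> R)
  (x : 'rV[R]_n.+1) : R :=
  \sum_(k < n.+1) partial k (partial k f) x.

Definition W10 {R : realType} {n : nat} (x : 'rV[R]_n.+1) : R :=
  rho x `^ (- ((n.+1)%:R - 2) / 2).

Definition Phi {R : realType} {n : nat} (eps : R) (pi : 'M[R]_n) (a1 a2 : R)
  (x : 'rV[R]_n.+1) : R :=
  eps * (\sum_(i < n) \sum_(j < n) pi i j * xb x i * xb x j)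
    / rho x `^ ((n.+1)%:R / 2)
  * ((((n.+1)%:R - 2) / 2) * (xN x - 1)
     + a1 * (xN x + 1) / rho x ^+ 2
     + a2 / rho x).

(* Main.v *)
Require Import Defs.
From HB Require Import structures.
From mathcomp Require Import all_boot all_order all_algebra.
From mathcomp Require Import all_classical all_reals all_analysis.
From mathcomp Require Import ring lra.
Import Order.TTheory GRing.Theory Num.Theory.
Import numFieldNormedType.Exports.
Set Implicit Arguments. Unset Strict Implicit. Unset Printing Implicit Defensive.
Local Open Scope classical_set_scope.
Local Open Scope ring_scope.

Section H.
Variables (R : realType) (V : normedModType R).
Implicit Types (f g : V -> R) (x v : V).

Lemma derive_line (W : normedModType R) (f : V -> W) x v :
  'D_v f x = 'D_1 (fun h : R => f (h *: v + x)) 0.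
Proof.
rewrite /derive /=.
have E : (fun h : R => h^-1 *: (f (((h%:A : R) + 0) *: v + x) - f (0 *: v + x))) =
  (fun h : R => h^-1 *: (f (h *: v + x) - f x)).
  by apply/funext => h; rewrite scale0r add0r addr0 [h%:A]mulr1.
by rewrite E.
Qed.

Lemma is_derive_line f x v df :
  is_derive (0:R) 1 (fun h : R => f (h *: v + x)) df -> is_derive x v f df.
Proof.
move=> [d1 v1]; apply: DeriveDef; first exact: (derivable1P f x v).2 d1.
by rewrite derive_line.
Qed.

Lemma dC x v (c : R) : is_derive x v (fun _ : V => c) 0.
Proof. exact: is_derive_cst. Qed.

Lemma dD f g x v df dg : is_derive x v f df -> is_derive x v g dg ->
  is_derive x v (fun y => f y + g y) (df + dg).
Proof. move=> H1 H2; exact: is_deriveD. Qed.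

Lemma dB f g x v df dg : is_derive x v f df -> is_derive x v g dg ->
  is_derive x v (fun y => f y - g y) (df - dg).
Proof. move=> H1 H2; exact: is_deriveB. Qed.

Lemma dM f g x v df dg : is_derive x v f df -> is_derive x v g dg ->
  is_derive x v (fun y => f y * g y) (f x * dg + g x * df).
Proof. move=> H1 H2; exact: is_deriveM. Qed.

Lemma dS (m : nat) (F : 'I_m -> V -> R) x v (dF : 'I_m -> R) :
  (forall i, is_derive x v (F i) (dF i)) ->
  is_derive x v (fun y => \sum_(i < m) F i y) (\sum_(i < m) dF i).
Proof.
move=> H; have := is_derive_sum H.
apply: near_eq_is_derive; near=> y; by rewrite fct_sumE.
Unshelve. all: by end_near. Qed.

Lemma dPow f x v df (p : R) : 0 < f x -> is_derive x v f df ->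
  is_derive x v (fun y => f y `^ p) (p * f x `^ (p - 1) * df).
Proof.
move=> fx0 [d1 v1]; apply: is_derive_line.
have dl : derivable (fun h : R => f (h *: v + x)) 0 1 by exact: (derivable1P f x v).1 d1.
have dp : derivable (fun r : R => r `^ p) (f (0 *: v + x)) 1.
  by rewrite scale0r add0r; case: (is_derive1_powR p fx0).
have -> : (fun h : R => f (h *: v + x) `^ p) =
  (fun r : R => r `^ p) \o (fun h : R => f (h *: v + x)) by [].
apply: DeriveDef.
  by apply/derivable1_diffP; apply: differentiable_comp; apply/derivable1_diffP.
rewrite -derive1E.
rewrite (derive1_comp dl dp) !derive1E -derive_line v1 scale0r add0r.
by rewrite (@derive_val _ _ _ _ _ _ _ (is_derive1_powR p fx0)) mulrC mulrA.
Qed.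

End H.


Section B.
Variables (R : realType) (n : nat) (pi : 'M[R]_n).
Notation V := 'rV[R]_n.+1.
Implicit Types (x y v w u : V).

Lemma dCoord x v j : is_derive x v (fun y : V => y ord0 j) (v ord0 j).
Proof.
have E : {near (0:R)^', cst (v ord0 j) =1 (fun h : R => h^-1 *: (((fun y : V => y ord0 j) \o shift x) (h *: v) - x ord0 j))}.
  near=> h; rewrite /= !mxE addrK /cst.
  have -> : h^-1 *: (h * v ord0 j) = h^-1 * (h * v ord0 j) by [].
  rewrite mulKf //.
  near: h; exact: (@nbhs_dnbhs_neq R 0).
have C : (fun h : R => h^-1 *: (((fun y : V => y ord0 j) \o shift x) (h *: v) - x ord0 j)) @ (0:R)^' --> v ord0 j.
  apply: cvg_trans; first exact: (near_eq_cvg E).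
  exact: cvg_cst.
apply: DeriveDef; first by apply/cvg_ex; exists (v ord0 j).
exact: cvg_lim C.
Unshelve. all: by end_near. Qed.

Lemma dxb x v i : is_derive x v (fun y : V => xb y i) (xb v i).
Proof. exact: dCoord. Qed.
Lemma dxN x v : is_derive x v (fun y : V => xN y) (xN v).
Proof. exact: dCoord. Qed.

Lemma dSq (f : V -> R) x v df : is_derive x v f df ->
  is_derive x v (fun y => f y ^+ 2) (2 * f x * df).
Proof.
move=> H; have -> : (fun y => f y ^+ 2) = (fun y => f y * f y).
  by apply/funext => y; rewrite expr2.
apply: (is_derive_eq (dM H H)).
ring.
Qed.

Ltac dstep := first [ exact: dxb | exact: dxN | exact: dC | apply: dD | apply: dB | apply: dM ].
Ltac dsolve := repeat dstep.

Definition Q (y : V) := \sum_(i < n) \sum_(j < n) pi i j * xb y i * xb y j.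
Definition DQ v (y : V) := \sum_(i < n) \sum_(j < n) pi i j * (xb v i * xb y j + xb y i * xb v j).
Definition DDQ v := \sum_(i < n) \sum_(j < n) pi i j * (xb v i * xb v j + xb v i * xb v j).
Definition Dr v (y : V) := \sum_(i < n) 2 * xb y i * xb v i + 2 * (xN y + 1) * xN v.
Definition DDr u w := \sum_(i < n) 2 * xb u i * xb w i + 2 * xN u * xN w.

Lemma dQ x v : is_derive x v Q (DQ v x).
Proof.
apply: is_derive_eq.
  apply: dS => i; apply: dS => j; dsolve.
rewrite /DQ; apply: eq_bigr => i _; apply: eq_bigr => j _; ring.
Qed.

Lemma dDQ x v : is_derive x v (DQ v) (DDQ v).
Proof.
apply: is_derive_eq.
  apply: dS => i; apply: dS => j; dsolve.
rewrite /DDQ; apply: eq_bigr => i _; apply: eq_bigr => j _; ring.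
Qed.

Lemma drho x v : is_derive x v rho (Dr v x).
Proof.
apply: is_derive_eq.
  apply: dD; first (apply: dS => i; apply: dSq; exact: dxb).
  apply: dSq; dsolve.
rewrite /Dr; congr (_ + _); try ring; try (apply: eq_bigr => i _; ring).
Qed.

Lemma dDr x u w : is_derive x u (Dr w) (DDr u w).
Proof.
apply: is_derive_eq.
  apply: dD; first (apply: dS => i; dsolve).
  dsolve.
rewrite /DDr; congr (_ + _); try ring; try (apply: eq_bigr => i _; ring).
Qed.

End B.


Ltac dstep := first [ exact: dxb | exact: dxN | exact: dC | exact: dQ | exact: dDQ
  | exact: drho | exact: dDr | apply: dD | apply: dB | apply: dM
  | (apply: dPow; first assumption) ].
Ltac dsolve := repeat dstep.

Section C.
Variables (R : realType) (n : nat) (pi : 'M[R]_n).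
Notation V := 'rV[R]_n.+1.
Implicit Types (x y v w u : V).

Definition T (a b p : R) (y : V) := Q pi y * (a * xN y + b) * rho y `^ p.
Definition DT (a b p : R) v (y : V) :=
  (DQ pi v y * (a * xN y + b) + Q pi y * (a * xN v)) * rho y `^ p
  + Q pi y * (a * xN y + b) * (p * rho y `^ (p - 1) * Dr v y).
Definition D2T (a b p : R) v (y : V) :=
  (DDQ pi v * (a * xN y + b) + 2 * DQ pi v y * (a * xN v)) * rho y `^ p
  + 2 * (DQ pi v y * (a * xN y + b) + Q pi y * (a * xN v)) * (p * rho y `^ (p - 1) * Dr v y)
  + Q pi y * (a * xN y + b) * (p * ((p - 1) * rho y `^ (p - 1 - 1) * Dr v y ^+ 2 + rho y `^ (p - 1) * DDr v v)).

Lemma dT a b p y v : 0 < rho y -> is_derive y v (T a b p) (DT a b p v y).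
Proof.
move=> ry; apply: is_derive_eq.
  dsolve.
rewrite /DT /=; ring.
Qed.

Lemma dDT a b p y v : 0 < rho y -> is_derive y v (DT a b p v) (D2T a b p v y).
Proof.
move=> ry; apply: is_derive_eq.
  dsolve.
rewrite /D2T /=; rewrite expr2; ring.
Qed.

Definition qW : R := - ((n.+1)%:R - 2) / 2.
Definition DW w (y : V) := qW * rho y `^ (qW - 1) * Dr w y.
Definition D2W u w (y : V) :=
  qW * ((qW - 1) * rho y `^ (qW - 1 - 1) * Dr u y) * Dr w y + qW * rho y `^ (qW - 1) * DDr u w.

Lemma dW y w : 0 < rho y -> is_derive y w (@W10 R n) (DW w y).
Proof.
move=> ry; apply: is_derive_eq.
  dsolve.
by rewrite /DW /qW.
Qed.

Lemma dDW y u w : 0 < rho y -> is_derive y u (DW w) (D2W u w y).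
Proof.
move=> ry; apply: is_derive_eq.
  dsolve.
rewrite /D2W /=; ring.
Qed.

Lemma rho_gt0 y : 0 < xN y -> 0 < rho y.
Proof.
move=> t0; rewrite /rho; apply: ltr_wpDl.
  by apply: sumr_ge0 => i _; exact: sqr_ge0.
by apply: exprn_gt0; apply: addr_gt0.
Qed.

Lemma near_rho x : 0 < xN x -> \forall y \near x, 0 < rho y.
Proof.
move=> t0.
have := cvgr_gt _ (@coord_continuous R 1 n.+1 ord0 ord_max x) 0 t0.
move=> H; near=> y; apply: rho_gt0; near: y; exact: H.
Unshelve. all: by end_near. Qed.

Lemma second (F DF : V -> R) d2 x u w :
  (\forall y \near x, is_derive y w F (DF y)) -> is_derive x u DF d2 ->
  'D_u (fun y => 'D_w F y) x = d2.
Proof.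
move=> H1 H2.
have H3 : is_derive x u (fun y => 'D_w F y) d2.
  apply: near_eq_is_derive H2.
  by apply: filterS H1 => y Hy; rewrite derive_val.
exact: derive_val.
Qed.

End C.


Section D.
Variables (R : realType) (n : nat) (pi : 'M[R]_n).
Notation V := 'rV[R]_n.+1.
Notation wi := (widen_ord (leqnSn n)).
Notation e := (@ecoord R n).
Implicit Types (x y v w u : V).

Lemma xb_e (k i : 'I_n) : xb (e (wi k)) i = (i == k)%:R.
Proof. by rewrite /xb /ecoord mxE eqxx /=. Qed.
Lemma xb_emax (i : 'I_n) : xb (e ord_max) i = 0.
Proof. by rewrite /xb /ecoord mxE eqxx /= -val_eqE /= ltn_eqF. Qed.
Lemma xN_e (k : 'I_n) : xN (e (wi k)) = 0.
Proof. by rewrite /xN /ecoord mxE eqxx /= -val_eqE /= gtn_eqF. Qed.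
Lemma xN_emax : xN (e ord_max) = 1.
Proof. by rewrite /xN /ecoord mxE !eqxx. Qed.

Lemma sum_delta (F : 'I_n -> R) (k : 'I_n) :
  \sum_(i < n) F i * (i == k)%:R = F k.
Proof.
rewrite (bigD1 k) //= eqxx mulr1 big1 ?addr0 // => i /negbTE ->.
by rewrite mulr0.
Qed.
Lemma sum_delta' (F : 'I_n -> R) (k : 'I_n) :
  \sum_(i < n) F i * (k == i)%:R = F k.
Proof.
rewrite -[RHS](sum_delta F k); apply: eq_bigr => i _; by rewrite eq_sym.
Qed.

Lemma S1 : \sum_(k < n.+1) DDQ pi (e k) = 2 * \tr pi.
Proof.
rewrite big_ord_recr /= /DDQ.
rewrite [X in _ + X]big1 ?addr0; last first.
  by move=> i _; apply: big1 => j _; rewrite !xb_emax; ring.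
rewrite /mxtrace mulr_sumr; apply: eq_bigr => k _.
transitivity (\sum_(i < n) (pi i k * 2) * (i == k)%:R); last first.
  by rewrite sum_delta mulrC.
apply: eq_bigr => i _.
transitivity (\sum_(j < n) (pi i j * 2 * (i == k)%:R) * (j == k)%:R).
  by apply: eq_bigr => j _; rewrite !xb_e; ring.
by rewrite sum_delta.
Qed.


Lemma DQ_emax y : DQ pi (e ord_max) y = 0.
Proof. by rewrite /DQ big1 // => i _; rewrite big1 // => j _; rewrite !xb_emax; ring. Qed.

Lemma Dr_e (k : 'I_n) y : Dr (e (wi k)) y = 2 * xb y k.
Proof.
rewrite /Dr xN_e mulr0 addr0.
transitivity (\sum_(i < n) (2 * xb y i) * (i == k)%:R); last by rewrite sum_delta.
by apply: eq_bigr => i _; rewrite xb_e.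
Qed.

Lemma Dr_emax y : Dr (e ord_max) y = 2 * (xN y + 1).
Proof.
rewrite /Dr xN_emax mulr1 big1 ?add0r // => i _; by rewrite xb_emax mulr0.
Qed.

Lemma DDr_e (k : 'I_n) : DDr (e (wi k)) (e (wi k)) = 2.
Proof.
rewrite /DDr xN_e mulr0 ?mul0r addr0.
transitivity (\sum_(i < n) ((2:R) * (i == k)%:R) * (i == k)%:R); last by rewrite sum_delta eqxx mulr1.
by apply: eq_bigr => i _; rewrite xb_e.
Qed.

Lemma DDr_emax : DDr (e ord_max) (e ord_max) = 2.
Proof.
rewrite /DDr xN_emax big1 ?add0r; first by rewrite !mulr1.
by move=> i _; rewrite !xb_emax mulr0 ?mul0r.
Qed.

Lemma S2 y : \sum_(k < n.+1) DQ pi (e k) y * xN (e k) = 0.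
Proof.
rewrite big_ord_recr /= DQ_emax mul0r addr0.
by apply: big1 => k _; rewrite xN_e mulr0.
Qed.

Lemma S3 y : \sum_(k < n.+1) DQ pi (e k) y * Dr (e k) y = 4 * Q pi y.
Proof.
rewrite big_ord_recr /= DQ_emax mul0r addr0.
under eq_bigr => k _ do rewrite Dr_e.
rewrite /DQ /Q.
transitivity (\sum_(k < n) \sum_(i < n) \sum_(j < n)
   ((pi i j * xb y j * 2 * xb y k) * (i == k)%:R + (pi i j * xb y i * 2 * xb y k) * (j == k)%:R)).
  apply: eq_bigr => k _; rewrite mulr_suml; apply: eq_bigr => i _.
  rewrite mulr_suml; apply: eq_bigr => j _; rewrite !xb_e; ring.
rewrite exchange_big /= mulr_sumr; apply: eq_bigr => i _.
rewrite exchange_big /= mulr_sumr; apply: eq_bigr => j _.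
rewrite big_split /= !sum_delta'; ring.
Qed.

Lemma S4 y : \sum_(k < n.+1) xN (e k) * Dr (e k) y = 2 * (xN y + 1).
Proof.
rewrite big_ord_recr /= xN_emax mul1r Dr_emax big1 ?add0r //.
by move=> k _; rewrite xN_e mul0r.
Qed.

Lemma S5 y : \sum_(k < n.+1) Dr (e k) y ^+ 2 = 4 * rho y.
Proof.
rewrite big_ord_recr /= Dr_emax /rho.
transitivity (\sum_(i < n) 4 * xb y i ^+ 2 + 4 * (xN y + 1) ^+ 2).
  congr (_ + _); last ring.
  by apply: eq_bigr => k _; rewrite Dr_e; ring.
rewrite -mulr_sumr; ring.
Qed.

Lemma S6 : \sum_(k < n.+1) DDr (e k) (e k) = 2 * (n.+1)%:R.
Proof.
rewrite big_ord_recr /= DDr_emax.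
under eq_bigr => k _ do rewrite DDr_e.
rewrite sumr_const card_ord -mulr_natr -addn1 natrD; ring.
Qed.

End D.


Section E.
Variables (R : realType) (n : nat) (pi : 'M[R]_n).
Notation V := 'rV[R]_n.+1.
Notation wi := (widen_ord (leqnSn n)).
Notation e := (@ecoord R n).
Implicit Types (x y v w u : V).

Lemma powR_pred (r p : R) : 0 < r -> r `^ (p - 1 - 1) * r = r `^ (p - 1).
Proof.
move=> r0.
rewrite -[X in _ * X](powRr1 (ltW r0)) -powRD; first by rewrite subrK.
by rewrite (gt_eqF r0) implybT.
Qed.

Lemma LapT a b p x : \tr pi = 0 -> 0 < rho x ->
  \sum_(k < n.+1) D2T pi a b p (e k) x =
  Q pi x * p * rho x `^ (p - 1) *
   ((a * xN x + b) * (2 * (n.+1)%:R + 4 + 4 * p) + 4 * a * (xN x + 1)).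
Proof.
move=> tr0 rx.
transitivity (\sum_(k < n.+1) (
   ((a * xN x + b) * rho x `^ p) * DDQ pi (e k)
 + (2 * a * rho x `^ p) * (DQ pi (e k) x * xN (e k))
 + (2 * (a * xN x + b) * p * rho x `^ (p - 1)) * (DQ pi (e k) x * Dr (e k) x)
 + (2 * Q pi x * a * p * rho x `^ (p - 1)) * (xN (e k) * Dr (e k) x)
 + (Q pi x * (a * xN x + b) * p * (p - 1) * rho x `^ (p - 1 - 1)) * (Dr (e k) x ^+ 2)
 + (Q pi x * (a * xN x + b) * p * rho x `^ (p - 1)) * DDr (e k) (e k))).
  by apply: eq_bigr => k _; rewrite /D2T; ring.
rewrite !big_split /= -!mulr_sumr S1 S2 S3 S4 S5 S6 tr0.
rewrite -(powR_pred p rx); ring.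
Qed.

End E.


Section F.
Variables (R : realType) (n : nat) (pi : 'M[R]_n).
Notation V := 'rV[R]_n.+1.
Notation wi := (widen_ord (leqnSn n)).
Notation e := (@ecoord R n).
Implicit Types (x y v w u : V).

Definition NN : R := (n.+1)%:R.
Definition cc : R := (NN - 2) / 2.
Definition p0 : R := - (NN / 2).

Lemma NN_gt0 : 0 < NN.
Proof. by rewrite /NN ltr0n. Qed.

Lemma rho_ge0 y : 0 <= rho y.
Proof.
rewrite /rho; apply: addr_ge0; last exact: sqr_ge0.
by apply: sumr_ge0 => i _; exact: sqr_ge0.
Qed.

Lemma Phi_T eps a1 a2 : Phi eps pi a1 a2 =
  fun y => eps * (T pi cc (- cc) p0 y + T pi a1 a1 (p0 - 2) y + T pi 0 a2 (p0 - 1) y).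
Proof.
apply/funext => y; rewrite /Phi /T.
have N0 := NN_gt0.
have [r0|rpos] := eqVneq (rho y) 0.
  rewrite r0 !powR0; first by rewrite invr0 !mulr0 !mul0r !addr0 mulr0.
  1-4: by rewrite ?/p0 -?/NN; apply/eqP => H; lra.
have rp : 0 < rho y by rewrite lt_neqAle eq_sym rpos rho_ge0.
rewrite /p0 (powRB (s:=2)) ?rpos ?implybT // (powRB (s:=1)) ?rpos ?implybT // !powRN.
rewrite powRr1 ?(ltW rp) // powR_mulrn ?(ltW rp) //.
have P0 : 0 < rho y `^ ((n.+1)%:R / 2) by apply: powR_gt0.
rewrite /cc /NN /Q.
set S := \sum_(i < n) _.
set P := rho y `^ _.
set r := rho y.
field.
by rewrite rpos (gt_eqF P0).
Qed.

End F.


Ltac dstep2 := first [ exact: dxb | exact: dxN | exact: dC | exact: dQ | exact: dDQ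
  | exact: drho | exact: dDr | apply: dD | apply: dB | apply: dM
  | (apply: dPow; first assumption) | (apply: dT; assumption) | (apply: dDT; assumption) ].
Ltac dsolve2 := repeat dstep2.

Section G.
Variables (R : realType) (n : nat) (pi : 'M[R]_n).
Notation V := 'rV[R]_n.+1.
Notation wi := (widen_ord (leqnSn n)).
Notation e := (@ecoord R n).
Implicit Types (x y v w u : V).
Notation QW := (qW R n).
Notation CC := (cc R n).
Notation P0 := (p0 R n).

Lemma DDr_e2 (i j : 'I_n) : DDr (e (wi i)) (e (wi j)) = 2 * (j == i)%:R.
Proof.
rewrite /DDr xN_e mulr0 ?mul0r addr0.
transitivity (\sum_(l < n) ((2:R) * (l == i)%:R) * (l == j)%:R); last by rewrite sum_delta.
by apply: eq_bigr => l _; rewrite !xb_e.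
Qed.

Lemma lapPhi eps a1 a2 x : 0 < xN x ->
  laplacian (Phi eps pi a1 a2) x = eps *
   (\sum_(k < n.+1) D2T pi CC (- CC) P0 (e k) x
  + \sum_(k < n.+1) D2T pi a1 a1 (P0 - 2) (e k) x
  + \sum_(k < n.+1) D2T pi 0 a2 (P0 - 1) (e k) x).
Proof.
move=> t0; have rx := rho_gt0 t0; have Hn := near_rho t0.
rewrite /laplacian Phi_T -!big_split /= mulr_sumr; apply: eq_bigr => k _.
rewrite /partial.
apply: (@second R n _ (fun y => eps * (DT pi CC (- CC) P0 (e k) y
   + DT pi a1 a1 (P0 - 2) (e k) y + DT pi 0 a2 (P0 - 1) (e k) y))).
  near=> y.
  have ry : 0 < rho y by near: y; exact: Hn.
  apply: is_derive_eq; first dsolve2.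
  rewrite /DT /T /=; ring.
apply: is_derive_eq; first dsolve2.
rewrite /D2T /DT /=; ring.
Unshelve. all: by end_near. Qed.

Lemma rhsW x : 0 < xN x ->
  \sum_(i < n) \sum_(j < n) pi i j * xN x * partial (wi i) (partial (wi j) (@W10 R n)) x =
  xN x * QW * (QW - 1) * rho x `^ (QW - 1 - 1) * 4 * Q pi x
  + xN x * QW * rho x `^ (QW - 1) * 2 * \tr pi.
Proof.
move=> t0; have rx := rho_gt0 t0; have Hn := near_rho t0.
rewrite /Q /mxtrace !mulr_sumr -big_split /=; apply: eq_bigr => i _.
transitivity (\sum_(j < n) (xN x * QW * (QW - 1) * rho x `^ (QW - 1 - 1) * 4 * (pi i j * xb x i * xb x j)
   + (xN x * QW * rho x `^ (QW - 1) * 2 * pi i j) * (j == i)%:R)); last first.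
  by rewrite big_split /= sum_delta mulr_sumr.
apply: eq_bigr => j _.
have H2 : is_derive x (e (wi i)) (DW (e (wi j))) (D2W (e (wi i)) (e (wi j)) x).
  exact: dDW.
have H1 : \forall y \near x, is_derive y (e (wi j)) (@W10 R n) (DW (e (wi j)) y).
  near=> y.
  have ry : 0 < rho y by near: y; exact: Hn.
  exact: dW.
rewrite /partial (second H1 H2).
by rewrite /D2W !Dr_e DDr_e2; ring.
Unshelve. all: by end_near. Qed.

End G.

Unset Implicit Arguments.
Local Close Scope classical_set_scope.

Theorem lemma4p3 (R : realType) (n : nat) (eps : R) (pi : 'M[R]_n) (a1 a2 : R) :
  (3 <= n)%N -> 0 < eps -> pi^T = pi -> \tr pi = 0 ->
  forall x : 'rV[R]_n.+1, 0 < xN x ->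
    - laplacian (Phi eps pi a1 a2) x =
    2 * eps * \sum_(i < n) \sum_(j < n)
      pi i j * xN x *
      partial (widen_ord (leqnSn n) i) (partial (widen_ord (leqnSn n) j) W10) x.
Proof.
move=> n3 eps0 piT tr0 x t0.
have rx := rho_gt0 t0.
rewrite lapPhi // rhsW // !LapT // tr0.
have E1 : qW R n - 1 - 1 = p0 R n - 1 by rewrite /qW /p0 /NN; field.
rewrite E1 /p0 /qW /cc /NN.
by field.
Qed.
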